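(* Fix the rates $P_i>0$, $i\in\mathcal S$, let $\hat P=\sum_{i\in\mathcal S}P_i$, and let $(E_i(0),\,i\in\mathcal S)$ be any initial energy configuration with total energy $E=\sum_iE_i(0)$. Let $(\tilde E_i(0),\,i\in\mathcal S)$ be the balanced configuration with the same total energy, $\tilde E_i(0)=E\,P_i/\hat P$ (assumed to satisfy $\tilde E_i(0)\le\overline E_i$). If a nonnegative demand function $(d(t),\,t\ge0)$ can be completely served on $[0,T]$ by some discharge-only policy starting from $(E_i(0))$, then it can be completely served on $[0,T]$ by some discharge-only policy starting from $(\tilde E_i(0))$.
   Context: A finite set $\mathcal S$ of energy stores is given. Store $i\in\mathcal S$ has capacity $\overline E_i>0$ and maximum discharge rate $P_i>0$. A (discharge-only) policy is a choice of measurable rate functions $(r_i(t),\,t\ge0)$, $i\in\mathcal S$, with stored energies $E_i(t)=E_i(0)-\int_0^t r_i(u)\,du$, subject to $0\le E_i(t)\le\overline E_i$, $0\le r_i(t)\le P_i$ and $\sum_{i\in\mathcal S}r_i(t)\le d(t)$ for all $t\ge0$, where $(d(t),\,t\ge0)$ is a nonnegative demand function. The demand is completely served on $[0,T]$ if $\sum_i r_i(t)=d(t)$ for almost every $t\in[0,T]$. A configuration is called balanced if $E_i/P_i$ is the same for all $i\in\mathcal S$. *)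

(* Defs.v *)
From HB Require Import structures.
From mathcomp Require Import all_boot all_order all_algebra.
From mathcomp Require Import all_classical all_reals all_analysis.
Set Implicit Arguments. Unset Strict Implicit. Unset Printing Implicit Defensive.
Import Order.TTheory GRing.Theory Num.Theory.
Local Open Scope classical_set_scope.
Local Open Scope ring_scope.

Section Storage.
Variables (R : realType) (S : finType).

Definition stored_energy (E0 : S -> R) (r : S -> R -> R) (i : S) (t : R) : R :=
  E0 i - Rintegral (@lebesgue_measure R) (`[0, t]%classic : set R) (r i).

Definition discharge_policy (Ebar P : S -> R) (d : R -> R) (E0 : S -> R)
    (r : S -> R -> R) : Prop :=
  (forall i, measurable_fun (`[0, +oo[%classic : set R) (r i)) /\
  (forall t, 0 <= t ->
     (forall i, 0 <= stored_energy E0 r i t <= Ebar i) /\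
     (forall i, 0 <= r i t <= P i) /\
     \sum_(i : S) r i t <= d t).

Definition completely_served (r : S -> R -> R) (d : R -> R) (T : R) : Prop :=
  {ae (@lebesgue_measure R), forall t : R, (`[0, T]%classic : set R) t -> \sum_(i : S) r i t = d t}.

Definition servable (Ebar P : S -> R) (d : R -> R) (E0 : S -> R) (T : R) : Prop :=
  exists r : S -> R -> R, discharge_policy Ebar P d E0 r /\ completely_served r d T.

End Storage.

(* Main.v *)
Require Import Defs.
From HB Require Import structures.
From mathcomp Require Import all_boot all_order all_algebra.
From mathcomp Require Import all_classical all_reals all_analysis.
From mathcomp Require Import ring lra measurable_realfun.
Import Order.TTheory GRing.Theory Num.Theory.
Local Open Scope ring_scope.

Section Helpers.
Context {R : realType}.
Local Notation mu := (@lebesgue_measure R).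
Local Open Scope classical_set_scope.

Lemma itv_fin (t : R) : (mu (`[0%R, t]%classic : set R) < +oo)%E.
Proof.
rewrite lebesgue_measure_itv /=; case: ifP => _; last exact: ltey.
by rewrite -EFinD ltry.
Qed.

Lemma intg (f : R -> R) (t M : R) : measurable_fun (`[0, t]%classic : set R) f ->
  (forall x, (`[0, t]%classic : set R) x -> `|f x| <= M) ->
  mu.-integrable (`[0, t]%classic : set R) (EFin \o f).
Proof.
move=> mf bd; apply: measurable_bounded_integrable => //.
  exact: itv_fin.
rewrite /bounded_near; near=> K => x Ax /=.
apply: le_trans (bd x Ax) _; near: K.
apply: nbhs_pinfty_ge; exact: num_real.
Unshelve. all: by end_near.
Qed.

Lemma sub0t (t : R) : (`[0, t]%classic : set R) `<=` (`[0, +oo[%classic : set R).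
Proof.
move=> x /=; rewrite !in_itv /= => /andP[-> _]; by [].
Qed.

End Helpers.

Section Main.
Context {R : realType} {S : finType}.
Local Notation mu := (@lebesgue_measure R).
Local Open Scope classical_set_scope.

Variables (P : S -> R) (r : S -> R -> R).
Hypothesis mr : forall j, measurable_fun (`[0, +oo[%classic : set R) (r j).
Hypothesis br : forall j x, 0 <= x -> 0 <= r j x <= P j.

Lemma int_sum_gen (t : R) (s : seq S) :
  mu.-integrable (`[0, t]%classic : set R) (EFin \o (fun x => \sum_(j <- s) r j x)).
Proof.
apply: (@intg _ _ _ (\sum_(j <- s) P j)).
  apply: measurable_sum => j; apply: measurable_funS (mr j) => //.
  exact: sub0t.
move=> x Ax; have x0 : 0 <= x by move: Ax => /=; rewrite in_itv /= => /andP[].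
rewrite ger0_norm; last by apply: sumr_ge0 => j _; case/andP: (br j x x0).
by apply: ler_sum => j _; case/andP: (br j x x0).
Qed.

Lemma int_one (t : R) (j : S) :
  mu.-integrable (`[0, t]%classic : set R) (EFin \o r j).
Proof.
have := int_sum_gen t [:: j]; apply: eq_integrable => //= x _.
by rewrite big_seq1.
Qed.

Lemma int_sum_eq (t : R) (s : seq S) :
  Rintegral mu (`[0, t]%classic : set R) (fun x => \sum_(j <- s) r j x) =
  \sum_(j <- s) Rintegral mu (`[0, t]%classic : set R) (r j).
Proof.
elim: s => [|j s IH].
  rewrite big_nil; under eq_Rintegral do rewrite big_nil.
  by rewrite Rintegral_cst // mul0r.
rewrite big_cons -IH; under eq_Rintegral do rewrite big_cons.
rewrite RintegralD //; [exact: int_one | exact: int_sum_gen].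
Qed.

End Main.

Lemma Phat_ge (R : realType) (S : finType) (P : S -> R) (i : S) :
  (forall j, 0 < P j) -> P i <= \sum_(j : S) P j.
Proof.
move=> HP; rewrite (bigD1 i) //= lerDl; apply: sumr_ge0 => j _.
exact: ltW.
Qed.

Theorem mainTheorem3 (R : realType) (S : finType) (Ebar P : S -> R)
    (d : R -> R) (E0 : S -> R) (T : R) :
  (forall i, 0 < Ebar i) -> (forall i, 0 < P i) ->
  (forall t, 0 <= t -> 0 <= d t) ->
  let Phat := \sum_(i : S) P i in
  let E := \sum_(i : S) E0 i in
  let Etilde := fun i => E * P i / Phat in
  (forall i, Etilde i <= Ebar i) ->
  servable Ebar P d E0 T ->
  servable Ebar P d Etilde T.
Proof.
move=> HEb HP Hd Phat E Etilde HEt [r [[mr hpol] hserve]].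
have br : forall j x, 0 <= x -> 0 <= r j x <= P j.
  by move=> j x x0; have [_ [H _]] := hpol x x0; exact: H.
have Phat0 : 0 <= Phat by apply: sumr_ge0 => j _; exact: ltW.
pose c i := P i / Phat.
have c0 : forall i, 0 <= c i by move=> i; apply: divr_ge0 => //; exact: ltW.
have sum_eq : forall X : R, \sum_(i : S) c i * X = X \/ (forall F : S -> R, \sum_(i : S) F i = 0).
  move=> X; case: (pickP (@predT S)) => [i0 _ | none].
    left; rewrite -mulr_suml /c -mulr_suml divff ?mul1r //.
    apply: lt0r_neq0; apply: (lt_le_trans (HP i0)); exact: Phat_ge.
  by right => F; apply: big1 => i _; have := none i.
have sumE : forall t, \sum_(i : S) c i * \sum_(j : S) r j t = \sum_(j : S) r j t.
  move=> t; case: (sum_eq (\sum_(j : S) r j t)) => [->//|H].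
  by rewrite !H.
exists (fun i t => c i * \sum_(j : S) r j t); split; last first.
  move: hserve; rewrite /completely_served; apply: filterS; first exact: (ae_filter_ringOfSetsType lebesgue_measure).
  by move=> t Ht Tt; rewrite sumE; exact: Ht.
split.
  move=> i; apply: measurable_funM; first exact: measurable_cst.
  exact: measurable_sum.
move=> t t0; have [hst [hr hd]] := hpol t t0.
split; last split; last by rewrite sumE.
- move=> i; rewrite /stored_energy.
  rewrite RintegralZl //; last exact: (int_sum_gen _ _ mr br).
  rewrite (int_sum_eq _ _ mr br).
  set I := \sum_(j <- _) _.
  have I0 : 0 <= I.
    apply: sumr_ge0 => j _; apply: Rintegral_ge0 => x /=.
    by rewrite in_itv /= => /andP[x0 _]; case/andP: (br j x x0).
  have IE : I <= E.
    rewrite -subr_ge0 /E /I -sumrB; apply: sumr_ge0 => j _.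
    by case/andP: (hst j).
  apply/andP; split.
    have -> : Etilde i - c i * I = c i * (E - I) by rewrite /Etilde /c; ring.
    by apply: mulr_ge0 => //; rewrite subr_ge0.
  apply: le_trans (HEt i); rewrite lerBlDr lerDl.
  exact: mulr_ge0.
- move=> i; have X0 : 0 <= \sum_(j : S) r j t.
    by apply: sumr_ge0 => j _; case/andP: (br j t t0).
  apply/andP; split; first exact: mulr_ge0.
  have Ppos : 0 < Phat by apply: (lt_le_trans (HP i)); exact: Phat_ge.
  have -> : P i = c i * Phat by rewrite /c divfK // lt0r_neq0.
  apply: ler_wpM2l => //; apply: ler_sum => j _.
  by case/andP: (br j t t0).
Qed.
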